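(* For every $\omega>0$ there exist $\Gamma>0$ and $N>0$ such that for every $\beta\in(0,1]$ the two-dimensional system $$\dot x=\omega A_0x-\beta\, b_0\frac{b_0^Tx}{(1+\|x\|^2)^{1/2}},\qquad x\in\mathbb{R}^2,$$ is $SISS_L\!\left(\beta\Gamma,\frac{N}{\beta}\right)$, its origin is globally asymptotically stable, and its linearization at $0$ is asymptotically stable.
   Context: $A_0=\begin{pmatrix}0&1\\-1&0\end{pmatrix}$, $b_0=\begin{pmatrix}0\\1\end{pmatrix}$, $\|\cdot\|$ is the Euclidean norm. Eventually bounded: $f:\mathbb{R}_{\ge0}\to\mathbb{R}^k$ is eventually bounded by $\delta$ if there is $T>0$ with $\|f(t)\|\le\delta$ for all $t\ge T$. $SISS_L(\Delta,N)$ for an input-free system $\dot x=f(x)$: for every $\delta\in(0,\Delta]$ and every bounded measurable $e:\mathbb{R}_{\ge0}\to\mathbb{R}^n$ eventually bounded by $\delta$, every solution of $\dot x=f(x)+e(t)$ is eventually bounded by $N\delta$. *)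

(* Defs.v *)
From Stdlib Require Import Reals Lra.
Open Scope R_scope.

Definition vec2 := (R * R)%type.
Definition vzero : vec2 := (0, 0).
Definition vnorm (x : vec2) : R := sqrt (fst x ^ 2 + snd x ^ 2).
Definition vadd (x y : vec2) : vec2 := (fst x + fst y, snd x + snd y).
Definition vsub (x y : vec2) : vec2 := (fst x - fst y, snd x - snd y).

Fixpoint rsum (f : nat -> R) (n : nat) : R :=
  match n with O => 0 | S k => rsum f k + f k end.

Definition covers (A : R -> Prop) (a b : nat -> R) : Prop :=
  (forall n, a n <= b n) /\ (forall t, A t -> exists n, a n < t < b n).

(* Lebesgue outer measure of A is <= r *)
Definition outer_le (A : R -> Prop) (r : R) : Prop :=
  forall eps, 0 < eps -> exists a b : nat -> R,
    covers A a b /\ forall n, rsum (fun i => b i - a i) n <= r + eps.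

Definition null_set (A : R -> Prop) : Prop := outer_le A 0.

(* Caratheodory criterion: m*(S) >= m*(S /\ A) + m*(S \ A) for all S *)
Definition leb_measurable (A : R -> Prop) : Prop :=
  forall (S : R -> Prop) r, outer_le S r ->
  forall eps, 0 < eps -> exists r1 r2,
    outer_le (fun t => S t /\ A t) r1 /\
    outer_le (fun t => S t /\ ~ A t) r2 /\ r1 + r2 <= r + eps.

Definition meas_fun (g : R -> R) : Prop :=
  forall c, leb_measurable (fun t => 0 <= t /\ g t < c).

Definition meas_vec (e : R -> vec2) : Prop :=
  meas_fun (fun t => fst (e t)) /\ meas_fun (fun t => snd (e t)).

Definition bounded_vec (e : R -> vec2) : Prop :=
  exists M, forall t, 0 <= t -> vnorm (e t) <= M.

Definition eventually_bounded (f : R -> vec2) (d : R) : Prop :=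
  exists T, 0 < T /\ forall t, T <= t -> vnorm (f t) <= d.

Definition abs_cont_on (g : R -> R) (T : R) : Prop :=
  forall eps, 0 < eps -> exists delta, 0 < delta /\
    forall (n : nat) (a b : nat -> R),
      (forall i, (i < n)%nat -> 0 <= a i <= b i /\ b i <= T) ->
      (forall i, (S i < n)%nat -> b i <= a (S i)) ->
      rsum (fun i => b i - a i) n < delta ->
      rsum (fun i => Rabs (g (b i) - g (a i))) n < eps.

(* x : [0,oo) -> R^2 is a (Caratheodory) solution of x' = F x + e(t):
   locally absolutely continuous, and the ODE holds for almost every t >= 0. *)
Definition is_solution (F : vec2 -> vec2) (e : R -> vec2) (x : R -> vec2) : Prop :=
  (forall T, 0 < T ->
     abs_cont_on (fun t => fst (x t)) T /\ abs_cont_on (fun t => snd (x t)) T) /\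
  exists Nul, null_set Nul /\
    forall t, 0 < t -> ~ Nul t ->
      derivable_pt_lim (fun s => fst (x s)) t (fst (vadd (F (x t)) (e t))) /\
      derivable_pt_lim (fun s => snd (x s)) t (snd (vadd (F (x t)) (e t))).

Definition no_input : R -> vec2 := fun _ => vzero.

Definition SISS_L (F : vec2 -> vec2) (Delta N : R) : Prop :=
  forall d, 0 < d <= Delta ->
  forall e : R -> vec2, meas_vec e -> bounded_vec e -> eventually_bounded e d ->
  forall x, is_solution F e x -> eventually_bounded x (N * d).

Definition converges_to_0 (x : R -> vec2) : Prop :=
  forall eps, 0 < eps -> exists T, forall t, T <= t -> vnorm (x t) < eps.

Definition lyap_stable (F : vec2 -> vec2) : Prop :=
  forall eps, 0 < eps -> exists delta, 0 < delta /\
    forall x, is_solution F no_input x -> vnorm (x 0) < delta ->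
      forall t, 0 <= t -> vnorm (x t) < eps.

Definition asympt_stable (F : vec2 -> vec2) : Prop :=
  lyap_stable F /\ exists r, 0 < r /\
    forall x, is_solution F no_input x -> vnorm (x 0) < r -> converges_to_0 x.

Definition glob_asympt_stable (F : vec2 -> vec2) : Prop :=
  lyap_stable F /\ forall x, is_solution F no_input x -> converges_to_0 x.

Record mat2 := Mat2 { m11 : R; m12 : R; m21 : R; m22 : R }.
Definition mapply (J : mat2) (x : vec2) : vec2 :=
  (m11 J * fst x + m12 J * snd x, m21 J * fst x + m22 J * snd x).

Definition frechet_deriv_at0 (F : vec2 -> vec2) (J : mat2) : Prop :=
  forall eps, 0 < eps -> exists delta, 0 < delta /\
    forall x, vnorm x < delta ->
      vnorm (vsub (vsub (F x) (F vzero)) (mapply J x)) <= eps * vnorm x.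

Definition linearization_AS (F : vec2 -> vec2) : Prop :=
  exists J, frechet_deriv_at0 F J /\ asympt_stable (mapply J).

Definition A0 (x : vec2) : vec2 := (snd x, - fst x).        (* [[0,1],[-1,0]] x *)
Definition b0 : vec2 := (0, 1).
Definition dot (x y : vec2) : R := fst x * fst y + snd x * snd y.
Definition vscale (c : R) (x : vec2) : vec2 := (c * fst x, c * snd x).

Definition sys (omega beta : R) (x : vec2) : vec2 :=
  vsub (vscale omega (A0 x))
       (vscale (beta * (dot b0 x / sqrt (1 + vnorm x ^ 2))) b0).

(* Main.v *)
Require Import Defs.
From Stdlib Require Import Reals Lra Lia Psatz ClassicalDescription ClassicalEpsilon Classical.
Open Scope R_scope.

Lemma rsum_ext f g n : (forall i, (i < n)%nat -> f i = g i) -> rsum f n = rsum g n.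
Proof. induction n; simpl; intros H; auto. rewrite IHn; [rewrite H|]; auto; intros; apply H; lia. Qed.

Lemma rsum_le f g n : (forall i, (i < n)%nat -> f i <= g i) -> rsum f n <= rsum g n.
Proof. induction n; simpl; intros H; [lra|]. assert (f n <= g n) by (apply H; lia).
 assert (rsum f n <= rsum g n) by (apply IHn; intros; apply H; lia). lra. Qed.

Lemma rsum_plus f g n : rsum (fun i => f i + g i) n = rsum f n + rsum g n.
Proof. induction n; simpl; lra. Qed.

Lemma rsum_scal c f n : rsum (fun i => c * f i) n = c * rsum f n.
Proof. induction n; simpl; [ring|]. rewrite IHn; ring. Qed.

Lemma rsum_zero n : rsum (fun _ => 0) n = 0.
Proof. induction n; simpl; lra. Qed.

Lemma rsum_shift f n : rsum f (S n) = f 0%nat + rsum (fun i => f (S i)) n.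
Proof. induction n; simpl in *; [lra|]. rewrite IHn; lra. Qed.

Lemma rsum_tele f n : rsum (fun k => f (S k) - f k) n = f n - f 0%nat.
Proof. induction n; simpl; [lra|]. rewrite IHn; lra. Qed.

Lemma rsum_swap (f : nat -> nat -> R) K M :
  rsum (fun k => rsum (fun n => f k n) M) K = rsum (fun n => rsum (fun k => f k n) K) M.
Proof. induction K; simpl. { rewrite rsum_zero; auto. }
 rewrite IHK. rewrite <- rsum_plus. auto. Qed.

Lemma rsum_delta (m : nat) c M : (m < M)%nat ->
  rsum (fun n => if Nat.eq_dec m n then c else 0) M = c.
Proof. induction M; intros H; [lia|]. simpl. destruct (Nat.eq_dec m M).
 - subst. rewrite rsum_ext with (g := fun _ => 0). rewrite rsum_zero; lra.
   intros; destruct (Nat.eq_dec M i); [lia|auto].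
 - rewrite IHM; [lra|lia]. Qed.

Lemma rsum_nonneg f n : (forall i, (i < n)%nat -> 0 <= f i) -> 0 <= rsum f n.
Proof. intros H. rewrite <- (rsum_zero n). apply rsum_le; auto. Qed.

Lemma rsum_abs f n : Rabs (rsum f n) <= rsum (fun i => Rabs (f i)) n.
Proof. induction n; simpl. rewrite Rabs_R0; lra.
 eapply Rle_trans. apply Rabs_triang. lra. Qed.

Lemma null_add_point N u : null_set N -> null_set (fun t => N t \/ t = u).
Proof.
 intros HN eps Heps. destruct (HN (eps/2)) as [a [b [[Hab Hc] Hs]]]; [lra|].
 exists (fun i => match i with O => u - eps/8 | S j => a j end).
 exists (fun i => match i with O => u + eps/8 | S j => b j end).
 split; [split|].
 - intros [|n]; [lra|apply Hab].
 - intros t [Ht|Ht]. destruct (Hc t Ht) as [n Hn]. exists (S n); auto.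
   exists O; subst; lra.
 - intros [|n]. simpl; lra. rewrite rsum_shift. cbv beta.
   specialize (Hs n). lra.
Qed.

Definition partition (fine : R->R->R->Prop) u v K (x tau : nat -> R) :=
 x 0%nat = u /\ x K = v /\ (forall k, (k <= K)%nat -> u <= x k <= v) /\
 (forall k, (k < K)%nat -> x k <= tau k <= x (S k) /\ fine (tau k) (x k) (x (S k))).

Lemma partition_extend fine u s w t K x tau :
  partition fine u s K x tau -> s <= t <= w -> fine t s w ->
  partition fine u w (S K) (fun k => if Nat.leb k K then x k else w)
                            (fun k => if Nat.ltb k K then tau k else t).
Proof.
 intros [H0 [HK [Hb Hf]]] Ht Hfi. split; [|split; [|split]].
 - simpl. auto.
 - replace (Nat.leb (S K) K) with false; auto. symmetry; apply Nat.leb_gt; lia.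
 - intros k Hk. destruct (Nat.leb k K) eqn:E. apply Nat.leb_le in E.
   specialize (Hb k E). split; lra. specialize (Hb K (le_n K)). split; lra.
 - intros k Hk. destruct (Nat.leb k K) eqn:E; [|apply Nat.leb_gt in E; lia].
   apply Nat.leb_le in E. destruct (Nat.ltb k K) eqn:E2.
   + apply Nat.ltb_lt in E2. destruct (Nat.leb (S k) K) eqn:E3; [|apply Nat.leb_gt in E3; lia].
     apply Hf; auto.
   + apply Nat.ltb_ge in E2. assert (k = K) by lia. subst k.
     replace (Nat.leb (S K) K) with false; [|symmetry; apply Nat.leb_gt; lia].
     rewrite HK. split; [lra|auto].
Qed.

Lemma cousin (fine : R->R->R->Prop) u v : u <= v ->
  (forall t, u <= t <= v -> exists d, 0 < d /\ forall p q, u <= p <= t -> t <= q <= v ->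
      q - p < d -> fine t p q) ->
  exists K x tau, partition fine u v K x tau.
Proof.
 intros Huv Hloc.
 set (E := fun s => u <= s <= v /\ exists K x tau, partition fine u s K x tau).
 assert (HE : E u). { split; [lra|]. exists O, (fun _ => u), (fun _ => u).
   repeat split; auto; try lra; intros; lia. }
 assert (Hb : bound E) by (exists v; intros s [Hs _]; lra).
 destruct (completeness E Hb (ex_intro _ u HE)) as [sg [Hub Hlub]].
 assert (Hsg1 : u <= sg) by (apply Hub; auto).
 assert (Hsg2 : sg <= v) by (apply Hlub; intros s [Hs _]; lra).
 destruct (Hloc sg (conj Hsg1 Hsg2)) as [d [Hd Hf]].
 assert (Hex : exists s, E s /\ sg - d/2 < s).
 { apply NNPP; intro Hn. assert (sg <= sg - d/2); [|lra].
   apply Hlub. intros s Hs. apply Rnot_lt_le. intro Hlt. apply Hn; eauto. }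
 destruct Hex as [s [[Hs [K [x [tau Hp]]]] Hss]].
 assert (s <= sg) by (apply Hub; split; eauto).
 set (w := Rmin v (sg + d/4)).
 assert (Hw1 : sg <= w) by (unfold w, Rmin; destruct Rle_dec; lra).
 assert (Hw2 : w <= v) by (unfold w, Rmin; destruct Rle_dec; lra).
 assert (Hw3 : w <= sg + d/4) by (unfold w, Rmin; destruct Rle_dec; lra).
 assert (Hfi : fine sg s w) by (apply Hf; lra).
 pose proof (partition_extend fine u s w sg K x tau Hp (conj H Hw1) Hfi) as Hp2.
 assert (Ew : E w) by (split; [lra|eauto]).
 assert (w <= sg) by (apply Hub; auto).
 assert (w = v) by (unfold w in *; unfold Rmin in *; destruct Rle_dec; lra).
 subst w. rewrite H1 in Hp2. eauto.
Qed.

Lemma pack_bound (x h : nat -> R) a b K : (forall k, (k<K)%nat -> x k <= x (S k)) -> a <= b ->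
  (forall k, (k<K)%nat -> h k = 0 \/ (h k = x (S k) - x k /\ a <= x k /\ x (S k) <= b)) ->
  rsum h K <= b - a.
Proof.
 intros Hm Hab Hh.
 assert (forall m, (m <= K)%nat -> rsum h m <= Rmax 0 (Rmin (x m) b - a)).
 { induction m; intros Hk; simpl.
   - unfold Rmax; destruct Rle_dec; lra.
   - assert (IH := IHm ltac:(lia)). assert (Hx := Hm m ltac:(lia)).
     destruct (Hh m ltac:(lia)) as [E|[E [E1 E2]]]; rewrite E;
     revert IH; unfold Rmax, Rmin; repeat destruct Rle_dec; lra. }
 specialize (H K (le_n K)). revert H; unfold Rmax, Rmin; repeat destruct Rle_dec; lra.
Qed.

Fixpoint maxn (f : nat -> nat) n := match n with O => O | S m => Nat.max (maxn f m) (f m) end.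
Lemma maxn_spec f n k : (k < n)%nat -> (f k <= maxn f n)%nat.
Proof. induction n; simpl; intros; [lia|]. destruct (Nat.eq_dec k n); [subst; lia|].
 specialize (IHn ltac:(lia)); lia. Qed.

Lemma le_eps_0 a : (forall eps, 0 < eps -> a <= 2 * eps) -> a <= 0.
Proof. intros H. apply Rnot_lt_le; intro. specialize (H (a/4) ltac:(lra)). lra. Qed.

Lemma mono g T u v N : 0 <= u -> u <= v -> v <= T -> abs_cont_on g T -> null_set N ->
 (forall t, u < t <= v -> ~ N t -> forall eta, 0 < eta -> exists d, 0 < d /\
    forall p q, u <= p <= t -> t <= q <= v -> q - p < d -> g q - g p <= eta * (q - p)) ->
 g v <= g u.
Proof.
 intros Hu Huv HvT Hac HN Hloc.
 cut (g v - g u <= 0); [lra|]. apply le_eps_0. intros eps Heps.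
 set (eta := eps / (v - u + 1)).
 assert (Heta : 0 < eta) by (unfold eta; apply Rdiv_lt_0_compat; lra).
 assert (Heta2 : eta * (v - u) <= eps).
 { unfold eta. apply Rmult_le_reg_r with (v - u + 1); [lra|].
   field_simplify; [|lra]. nra. }
 destruct (Hac eps Heps) as [dl [Hdl Hac']].
 destruct (null_add_point N u HN (dl/2) ltac:(lra)) as [a [b [[Hab Hcov] Hs]]].
 set (fine := fun t p q : R => (exists n, a n <= p /\ q <= b n) \/ g q - g p <= eta * (q - p)).
 destruct (cousin fine u v ltac:(lra)) as [K [x [tau [H0 [HK [Hb Hf]]]]]].
 { intros t Ht. destruct (classic (N t \/ t = u)) as [Hn|Hn].
   - destruct (Hcov t Hn) as [n Hn2]. exists (Rmin (t - a n) (b n - t)). split.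
     unfold Rmin; destruct Rle_dec; lra.
     intros p q Hp Hq Hpq. left. exists n. revert Hpq; unfold Rmin; destruct Rle_dec; intros; lra.
   - assert (u < t) by (destruct (Req_dec t u); [tauto|lra]).
     destruct (Hloc t ltac:(lra) ltac:(tauto) eta Heta) as [d [Hd Hd2]].
     exists d; split; auto. intros p q Hp Hq Hpq; right; apply Hd2; auto. }
 set (Sd := fun k => exists n, a n <= x k /\ x (S k) <= b n).
 set (nk := fun k => match excluded_middle_informative (Sd k) with
     | left p => proj1_sig (constructive_indefinite_description _ p) | right _ => 0%nat end).
 assert (Hnk : forall k, Sd k -> a (nk k) <= x k /\ x (S k) <= b (nk k)).
 { intros k Hk. unfold nk. destruct (excluded_middle_informative (Sd k)); [|tauto].
   destruct (constructive_indefinite_description _ s) as [n Hn]; simpl; auto. }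
 assert (Hmon : forall k, (k < K)%nat -> x k <= x (S k)).
 { intros k Hk. destruct (Hf k Hk) as [[A B] _]. lra. }
 set (len := fun k => if excluded_middle_informative (Sd k) then x (S k) - x k else 0).
 assert (Hlen : rsum len K <= dl/2).
 { set (M := S (maxn nk K)).
   rewrite (rsum_ext len (fun k => rsum (fun n =>
      if excluded_middle_informative (Sd k) then
        (if Nat.eq_dec (nk k) n then x (S k) - x k else 0) else 0) M)).
   2:{ intros k Hk. unfold len. destruct (excluded_middle_informative (Sd k)).
       rewrite rsum_delta; auto. unfold M. pose proof (maxn_spec nk K k Hk); lia.
       rewrite rsum_zero; auto. }
   rewrite rsum_swap. apply Rle_trans with (rsum (fun i => b i - a i) M); [|specialize (Hs M); lra].
   apply rsum_le. intros n _. apply (pack_bound x); auto.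
   intros k Hk. destruct (excluded_middle_informative (Sd k)); auto.
   destruct (Nat.eq_dec (nk k) n); auto. right. subst n. split; auto. }
 set (aa := x). set (bb := fun k => if excluded_middle_informative (Sd k) then x (S k) else x k).
 assert (Hac2 := Hac' K aa bb).
 assert (HA : rsum (fun i => Rabs (g (bb i) - g (aa i))) K < eps).
 { apply Hac2.
   - intros i Hi. unfold aa, bb. pose proof (Hb i ltac:(lia)). pose proof (Hb (S i) ltac:(lia)).
     pose proof (Hmon i Hi). destruct excluded_middle_informative; (split; [split|]); lra.
   - intros i Hi. unfold aa, bb. pose proof (Hmon i ltac:(lia)). destruct excluded_middle_informative; lra.
   - rewrite (rsum_ext _ len). lra. intros i Hi. unfold bb, aa, len.
     destruct excluded_middle_informative; lra. }
 assert (Htel : g v - g u = rsum (fun k => g (x (S k)) - g (x k)) K).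
 { rewrite (rsum_tele (fun k => g (x k))). rewrite H0, HK. auto. }
 rewrite Htel.
 apply Rle_trans with (rsum (fun i => Rabs (g (bb i) - g (aa i)) + eta * (x (S i) - x i)) K).
 { apply rsum_le. intros k Hk. unfold aa, bb. pose proof (Hmon k Hk).
   destruct excluded_middle_informative as [Hs1|Hs1].
   - pose proof (Rle_abs (g (x (S k)) - g (x k))). nra.
   - rewrite Rminus_diag, Rabs_R0. destruct (Hf k Hk) as [_ [Hfa|Hfa]].
     exfalso; apply Hs1; auto. lra. }
 rewrite rsum_plus, rsum_scal. rewrite (rsum_tele x). rewrite H0, HK. lra.
Qed.

Lemma ac_single g T : abs_cont_on g T -> forall eps, 0 < eps -> exists d, 0 < d /\
  forall a b, 0 <= a -> a <= b -> b <= T -> b - a < d -> Rabs (g b - g a) < eps.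
Proof.
 intros Hac eps Heps. destruct (Hac eps Heps) as [d [Hd H]]. exists d; split; auto.
 intros a b Ha Hab Hb Hd2. specialize (H 1%nat (fun _ => a) (fun _ => b)). simpl in H.
 cut (0 + Rabs (g b - g a) < eps); [lra|]. apply H; try lra.
 intros i Hi; repeat split; lra. intros i Hi; lia.
Qed.

Lemma ac_bounded g T : abs_cont_on g T -> exists B, forall t, 0 <= t -> t <= T -> Rabs (g t) <= B.
Proof.
 intros Hac. destruct (ac_single g T Hac 1 ltac:(lra)) as [d [Hd H]].
 assert (Hm : forall m : nat, forall t, 0 <= t -> t <= T -> t <= INR m * (d/2) ->
     Rabs (g t - g 0) <= INR m).
 { induction m; intros t Ht0 HtT Htm.
   - simpl in Htm. replace t with 0 by lra. rewrite Rminus_diag, Rabs_R0; simpl; lra.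
   - rewrite S_INR in *. set (t' := Rmax 0 (t - d/2)).
     assert (0 <= t' /\ t' <= t /\ t - t' <= d/2 /\ t' <= INR m * (d/2)).
     { unfold t', Rmax; destruct Rle_dec; pose proof (pos_INR m); nra. }
     assert (Rabs (g t - g t') < 1) by (apply H; lra).
     assert (Rabs (g t' - g 0) <= INR m) by (apply IHm; lra).
     replace (g t - g 0) with ((g t - g t') + (g t' - g 0)) by ring.
     eapply Rle_trans; [apply Rabs_triang|]. lra. }
 destruct (INR_archimed (d/2) T ltac:(lra)) as [m Hm2].
 exists (INR m + Rabs (g 0)). intros t Ht0 HtT.
 assert (Rabs (g t - g 0) <= INR m) by (apply Hm; lra).
 replace (g t) with ((g t - g 0) + g 0) by ring.
 eapply Rle_trans; [apply Rabs_triang|]. lra.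
Qed.

Lemma ac_dom h f g T C : 0 <= C -> abs_cont_on f T -> abs_cont_on g T ->
  (forall a b, 0 <= a -> a <= b -> b <= T ->
     Rabs (h b - h a) <= C * (Rabs (f b - f a) + Rabs (g b - g a))) ->
  abs_cont_on h T.
Proof.
 intros HC Hf Hg Hh eps Heps.
 set (e' := eps / (2 * (C + 1))).
 assert (He' : 0 < e') by (unfold e'; apply Rdiv_lt_0_compat; lra).
 assert (HCe : C * (2 * e') < eps).
 { unfold e'. apply Rmult_lt_reg_r with (C + 1); [lra|]. field_simplify; lra. }
 destruct (Hf e' He') as [d1 [Hd1 H1]]. destruct (Hg e' He') as [d2 [Hd2 H2]].
 exists (Rmin d1 d2). split. unfold Rmin; destruct Rle_dec; lra.
 intros n a b Hab Hord Hs.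
 assert (A1 : rsum (fun i => Rabs (f (b i) - f (a i))) n < e').
 { apply H1; auto. revert Hs; unfold Rmin; destruct Rle_dec; lra. }
 assert (A2 : rsum (fun i => Rabs (g (b i) - g (a i))) n < e').
 { apply H2; auto. revert Hs; unfold Rmin; destruct Rle_dec; lra. }
 eapply Rle_lt_trans.
 apply rsum_le with (g := fun i => C * (Rabs (f (b i) - f (a i)) + Rabs (g (b i) - g (a i)))).
 intros i Hi. destruct (Hab i Hi) as [[X Y] Z]. apply Hh; auto.
 rewrite rsum_scal, rsum_plus. nra.
Qed.

Lemma ac_id T : abs_cont_on (fun t => t) T.
Proof.
 intros eps Heps. exists eps; split; auto. intros n a b Hab _ Hs.
 rewrite (rsum_ext _ (fun i => b i - a i)); auto.
 intros i Hi. destruct (Hab i Hi) as [[X Y] Z]. rewrite Rabs_right; lra.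
Qed.

Lemma ac_const c T : abs_cont_on (fun _ => c) T.
Proof.
 intros eps Heps. exists 1; split; [lra|]. intros n a b _ _ _.
 rewrite (rsum_ext _ (fun _ => 0)). rewrite rsum_zero; auto.
 intros; rewrite Rminus_diag, Rabs_R0; auto.
Qed.

Lemma ac_plus f g T : abs_cont_on f T -> abs_cont_on g T -> abs_cont_on (fun t => f t + g t) T.
Proof.
 intros Hf Hg. apply (ac_dom _ f g T 1); auto; [lra|]. intros a b _ _ _.
 replace (f b + g b - (f a + g a)) with ((f b - f a) + (g b - g a)) by ring.
 eapply Rle_trans; [apply Rabs_triang|]. lra.
Qed.

Lemma ac_scal c f T : abs_cont_on f T -> abs_cont_on (fun t => c * f t) T.
Proof.
 intros Hf. apply (ac_dom _ f f T (Rabs c)); auto; [apply Rabs_pos|]. intros a b _ _ _.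
 replace (c * f b - c * f a) with (c * (f b - f a)) by ring. rewrite Rabs_mult.
 pose proof (Rabs_pos c); pose proof (Rabs_pos (f b - f a)). nra.
Qed.

Lemma ac_mult f g T : abs_cont_on f T -> abs_cont_on g T -> abs_cont_on (fun t => f t * g t) T.
Proof.
 intros Hf Hg. destruct (ac_bounded f T Hf) as [Bf HBf]. destruct (ac_bounded g T Hg) as [Bg HBg].
 apply (ac_dom _ f g T (Rabs Bf + Rabs Bg)); auto.
 pose proof (Rabs_pos Bf); pose proof (Rabs_pos Bg); lra.
 intros a b Ha Hab Hb.
 replace (f b * g b - f a * g a) with (f b * (g b - g a) + g a * (f b - f a)) by ring.
 eapply Rle_trans; [apply Rabs_triang|]. rewrite !Rabs_mult.
 assert (Rabs (f b) <= Rabs Bf) by (eapply Rle_trans; [apply HBf; lra|apply RRle_abs]).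
 assert (Rabs (g a) <= Rabs Bg) by (eapply Rle_trans; [apply HBg; lra|apply RRle_abs]).
 pose proof (Rabs_pos (f b)); pose proof (Rabs_pos (g a));
 pose proof (Rabs_pos (g b - g a)); pose proof (Rabs_pos (f b - f a)). nra.
Qed.

Lemma ac_lip (phi : R -> R) (P : R -> Prop) L f T : 0 <= L -> abs_cont_on f T ->
  (forall t, 0 <= t -> t <= T -> P (f t)) ->
  (forall y z, P y -> P z -> Rabs (phi y - phi z) <= L * Rabs (y - z)) ->
  abs_cont_on (fun t => phi (f t)) T.
Proof.
 intros HL Hf HP Hphi. apply (ac_dom _ f f T L); auto. intros a b Ha Hab Hb.
 eapply Rle_trans. apply Hphi; apply HP; lra. pose proof (Rabs_pos (f b - f a)). nra.
Qed.

Lemma deriv_local f t D : derivable_pt_lim f t D -> forall eta, 0 < eta -> exists d, 0 < d /\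
  forall p q, t - d < p -> p <= t -> t <= q -> q < t + d ->
   f q - f p <= (D + eta) * (q - p) /\ (D - eta) * (q - p) <= f q - f p.
Proof.
 intros Hd eta Heta. destruct (Hd (eta/2) ltac:(lra)) as [[d Hdp] Hdd]. simpl in Hdd.
 exists d; split; auto.
 assert (Hone : forall h, Rabs h < d -> f (t + h) - f t <= D * h + (eta/2) * Rabs h /\
                                     D * h - (eta/2) * Rabs h <= f (t + h) - f t).
 { intros h Hh. destruct (Req_dec h 0) as [E|E].
   - subst. rewrite Rplus_0_r, Rminus_diag, Rabs_R0. lra.
   - specialize (Hdd h E Hh). apply Rabs_def2 in Hdd. destruct Hdd as [A B].
     set (y := (f (t + h) - f t) / h) in *.
     assert (Hy : f (t + h) - f t = y * h) by (unfold y; field; auto).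
     rewrite Hy. destruct (Rle_lt_dec 0 h).
     + rewrite Rabs_right by lra. split; nra.
     + rewrite Rabs_left by lra. split; nra. }
 intros p q Hp1 Hp2 Hq1 Hq2.
 destruct (Hone (q - t)) as [A1 A2]. rewrite Rabs_right; lra.
 destruct (Hone (p - t)) as [B1 B2]. rewrite Rabs_left1; lra.
 replace (t + (q - t)) with q in * by ring. replace (t + (p - t)) with p in * by ring.
 rewrite (Rabs_right (q - t)) in * by lra. rewrite (Rabs_left1 (p - t)) in * by lra.
 split; nra.
Qed.

Lemma mono_deriv g T u v N : 0 <= u -> u <= v -> v <= T -> abs_cont_on g T -> null_set N ->
 (forall t, u < t <= v -> ~ N t -> exists D, derivable_pt_lim g t D /\ D <= 0) ->
 g v <= g u.
Proof.
 intros Hu Huv HvT Hac HN Hd. apply (mono g T u v N); auto.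
 intros t Ht Hn eta Heta. destruct (Hd t Ht Hn) as [D [HD HD0]].
 destruct (deriv_local g t D HD eta Heta) as [d [Hd0 Hdd]].
 exists d; split; auto. intros p q Hp Hq Hpq.
 destruct (Hdd p q ltac:(lra) ltac:(lra) ltac:(lra) ltac:(lra)) as [A _]. nra.
Qed.

Lemma Rmax_lip y z th : Rabs (Rmax y th - Rmax z th) <= 1 * Rabs (y - z).
Proof. unfold Rmax; repeat destruct Rle_dec; unfold Rabs; repeat destruct Rcase_abs; lra. Qed.

Lemma level w N T0 th c : 0 <= T0 -> (forall T, abs_cont_on w T) -> null_set N -> 0 < c ->
 (forall t, T0 < t -> ~ N t -> exists D, derivable_pt_lim w t D /\ (th <= w t -> D <= -c)) ->
 exists T, T0 <= T /\ forall t, T <= t -> w t <= th.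
Proof.
 intros HT0 Hac HN Hc Hd.
 assert (StepA : forall s, T0 <= s -> w s <= th -> forall t, s <= t -> w t <= th).
 { intros s Hs Hws t Hst.
   cut (Rmax (w t) th <= Rmax (w s) th).
   { unfold Rmax; repeat destruct Rle_dec; lra. }
   apply (mono (fun y => Rmax (w y) th) t s t N); auto; try lra.
   - apply (ac_lip (fun y => Rmax y th) (fun _ => True) 1 w t); auto; try lra.
     intros; apply Rmax_lip.
   - intros tau Htau Hn eta Heta. destruct (Hd tau ltac:(lra) Hn) as [D [HD HDc]].
     destruct (deriv_local w tau D HD eta Heta) as [d0 [Hd0 Hdd]].
     destruct (Rle_lt_dec D 0) as [HD0|HD0].
     + exists d0; split; auto. intros p q Hp Hq Hpq.
       destruct (Hdd p q ltac:(lra) ltac:(lra) ltac:(lra) ltac:(lra)) as [A _].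
       unfold Rmax; repeat destruct Rle_dec; nra.
     + assert (Hlt : w tau < th) by (destruct (Rle_lt_dec th (w tau)); [specialize (HDc r); lra|lra]).
       exists (Rmin d0 ((th - w tau) / (D + eta))). split.
       { unfold Rmin; destruct Rle_dec; auto. apply Rdiv_lt_0_compat; lra. }
       intros p q Hp Hq Hpq.
       assert (Hm1 : q - p < d0) by (revert Hpq; unfold Rmin; destruct Rle_dec; lra).
       assert (Hm2 : (D + eta) * (q - p) < th - w tau).
       { assert (q - p < (th - w tau) / (D + eta)) by (revert Hpq; unfold Rmin; destruct Rle_dec; lra).
         apply Rmult_lt_compat_l with (r := D + eta) in H; [|lra].
         replace ((D + eta) * ((th - w tau) / (D + eta))) with (th - w tau) in H by (field; lra).
         lra. }
       destruct (Hdd tau q ltac:(lra) ltac:(lra) ltac:(lra) ltac:(lra)) as [A _].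
       assert (w q <= th) by nra.
       unfold Rmax; repeat destruct Rle_dec; nra. }
 assert (StepB : exists s, T0 <= s /\ w s <= th).
 { apply NNPP; intro Hn.
   assert (Hall : forall t, T0 <= t -> th < w t).
   { intros t Ht. apply Rnot_le_lt. intro; apply Hn; eauto. }
   set (t1 := T0 + (w T0 - th) / c + 1).
   assert (Ht1 : T0 <= t1).
   { unfold t1. pose proof (Hall T0 (Rle_refl _)).
     assert (0 <= (w T0 - th) / c) by (apply Rmult_le_pos; [lra|left; apply Rinv_0_lt_compat; lra]). lra. }
   assert (w t1 + c * t1 <= w T0 + c * T0).
   { apply (mono (fun y => w y + c * y) t1 T0 t1 N); auto; try lra.
     - apply ac_plus; auto. apply ac_scal, ac_id.
     - intros tau Htau Hnn eta Heta. destruct (Hd tau ltac:(lra) Hnn) as [D [HD HDc]].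
       assert (D <= - c) by (apply HDc; left; apply Hall; lra).
       destruct (deriv_local w tau D HD eta Heta) as [d0 [Hd0 Hdd]].
       exists d0; split; auto. intros p q Hp Hq Hpq.
       destruct (Hdd p q ltac:(lra) ltac:(lra) ltac:(lra) ltac:(lra)) as [A _]. nra. }
   assert (c * (t1 - T0) = w T0 - th + c) by (unfold t1; field; lra).
   pose proof (Hall t1 Ht1). nra. }
 destruct StepB as [s [Hs Hws]]. exists s; split; auto. intros; eapply StepA; eauto.
Qed.

Lemma sqnn a : 0 <= a * a.
Proof. apply Rle_0_sqr. Qed.

Lemma abs_le_of_sq u v : 0 <= v -> u * u <= v * v -> Rabs u <= v.
Proof. intros Hv H. unfold Rabs; destruct Rcase_abs; nra. Qed.

Lemma cs_bound x1 x2 e1 e2 r d : 0 <= r -> 0 <= d -> r * r = x1*x1 + x2*x2 ->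
  e1*e1 + e2*e2 <= d*d -> Rabs (x1*e1 + x2*e2) <= r * d.
Proof. intros Hr Hd Hrr He. apply abs_le_of_sq. apply Rmult_le_pos; auto.
 assert ((x1*e1+x2*e2)*(x1*e1+x2*e2) <= (x1*x1+x2*x2)*(e1*e1+e2*e2)).
 { pose proof (sqnn (x1*e2 - x2*e1)). nra. }
 rewrite <- Hrr in H. assert (r*r*(e1*e1+e2*e2) <= r*r*(d*d)) by (apply Rmult_le_compat_l; nra).
 nra. Qed.

Definition kap (om : R) := om * om / (2 + 2 * om * om).

Lemma kap_facts om : 0 < om -> 0 < kap om /\ kap om <= 1/2 /\ kap om / (om * om) <= 1/2
   /\ kap om / om <= 1/4.
Proof. intros H. unfold kap. assert (0 < 2 + 2*om*om) by nra. pose proof (sqnn (om - 1)).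
 repeat split.
 - apply Rdiv_lt_0_compat; nra.
 - apply Rmult_le_reg_r with (2 + 2*om*om); auto. field_simplify; [nra|apply Rgt_not_eq; nra].
 - replace (om * om / (2 + 2 * om * om) / (om * om)) with (/ (2 + 2*om*om)) by (field; nra).
   apply Rmult_le_reg_r with (2 + 2*om*om); auto. field_simplify; [nra|apply Rgt_not_eq; nra].
 - replace (om * om / (2 + 2 * om * om) / om) with (om / (2 + 2*om*om)) by (field; nra).
   apply Rmult_le_reg_r with (2 + 2*om*om); auto. field_simplify; [nra|apply Rgt_not_eq; nra].
Qed.

(* deterministic part, with z = 1/s *)
Lemma Dpart om be kp k x1 x2 z m : 0 < om -> 0 < be <= 1 -> 0 < kp -> kp <= 1/2 ->
  kp / (om*om) <= 1/2 -> k = kp * be / om -> 0 < z -> z <= 1 -> 0 <= m -> m <= 1 ->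
  -2*be*x2*x2*z + k*om*(x2*x2 - x1*x1)*z - k*be*(x1*x2)*(z*z)*(1 - m)
   <= - (kp*be/2) * (x1*x1+x2*x2) * z.
Proof.
 intros Hom Hbe Hkp Hkp2 Hkp3 Hk Hz Hz1 Hm0 Hx2.
 assert (Hkom : k * om = kp * be) by (subst; field; lra).
 assert (Hk0 : 0 <= k) by (subst; apply Rmult_le_pos; [nra| left; apply Rinv_0_lt_compat; lra]).
 rewrite Hkom.

 assert (Hc : Rabs (k*be*(x1*x2)*(z*z)*(1-m)) <= (kp/om) * Rabs (x1*x2) * z * be).
 { assert (H1m : 0 <= 1 - m) by lra.
   assert (HA : 0 <= k*be*(z*z)*(1-m)) by (repeat apply Rmult_le_pos; try lra; apply sqnn).
   replace (k*be*(x1*x2)*(z*z)*(1-m)) with ((k*be*(z*z)*(1-m)) * (x1*x2)) by ring.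
   rewrite Rabs_mult, (Rabs_right (k*be*(z*z)*(1-m))) by lra.
   assert (k * be <= kp / om * be).
   { subst k. unfold Rdiv. assert (0 < /om) by (apply Rinv_0_lt_compat; lra). nra. }
   pose proof (Rabs_pos (x1*x2)). assert (z * z * (1 - m) <= z) by nra.
   assert (0 <= kp/om) by (apply Rmult_le_pos; [lra| left; apply Rinv_0_lt_compat; lra]).
   assert (0 <= z*z*(1-m)) by nra.
   assert (k*be*(z*z)*(1-m) <= kp/om*be*z).
   { replace (k*be*(z*z)*(1-m)) with ((k*be)*(z*z*(1-m))) by ring.
     apply Rle_trans with ((kp/om*be)*(z*z*(1-m))). apply Rmult_le_compat_r; auto.
     replace (kp/om*be*z) with ((kp/om*be)*z) by ring. apply Rmult_le_compat_l; nra. }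
   nra. }
 assert (Ham : (kp/om) * Rabs (x1*x2) <= kp/2 * (x1*x1) + (kp/(om*om))/2 * (x2*x2)).
 { assert (H2 : Rabs (x1*x2) <= om/2 * (x1*x1) + /(2*om) * (x2*x2)).
   { rewrite Rabs_mult. assert (0 < /(2*om)) by (apply Rinv_0_lt_compat; lra).
     assert (om * /(2*om) = /2) by (field; lra).
     pose proof (Rabs_pos x1); pose proof (Rabs_pos x2).
     assert (E1 : x1 * x1 = Rabs x1 * Rabs x1) by (rewrite <- Rabs_mult; rewrite Rabs_right; [auto|apply Rle_ge, sqnn]).
     assert (E2 : x2 * x2 = Rabs x2 * Rabs x2) by (rewrite <- Rabs_mult; rewrite Rabs_right; [auto|apply Rle_ge, sqnn]).
     rewrite E1, E2.
     pose proof (sqnn (om * Rabs x1 - Rabs x2)).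
     assert (om/2 * (Rabs x1 * Rabs x1) + /(2*om) * (Rabs x2 * Rabs x2) - Rabs x1 * Rabs x2
            = /(2*om) * ((om * Rabs x1 - Rabs x2) * (om * Rabs x1 - Rabs x2))) by (field; lra).
     nra. }
   assert (0 <= kp/om) by (apply Rmult_le_pos; [lra| left; apply Rinv_0_lt_compat; lra]).
   replace (kp/2*(x1*x1) + kp/(om*om)/2*(x2*x2)) with (kp/om * (om/2 * (x1*x1) + /(2*om) * (x2*x2)))
     by (field; lra). nra. }
 pose proof (Rle_abs (k*be*(x1*x2)*(z*z)*(1-m))).
 assert (Rabs (x1 * x2) * z * be * (kp/om) <= (kp/2 * (x1*x1) + kp/(om*om)/2 * (x2*x2)) * z * be).
 { assert (0 <= z * be) by nra. nra. }
 assert (0 <= x1*x1) by apply sqnn. assert (0 <= x2*x2) by apply sqnn.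
 assert (kp / (om*om) / 2 * (x2*x2) * z * be <= 1/4 * (x2*x2) * z * be).
 { assert (0 <= x2*x2*z*be) by (apply Rmult_le_pos; [apply Rmult_le_pos; [apply sqnn|lra]|lra]).
   replace (kp / (om*om) / 2 * (x2*x2) * z * be) with ((kp/(om*om)/2) * (x2*x2*z*be)) by ring.
   replace (1/4 * (x2*x2) * z * be) with ((1/4) * (x2*x2*z*be)) by ring.
   apply Rmult_le_compat_r; lra. }
 set (P := be*z*(x2*x2)). set (Q := be*z*(x1*x1)).
 assert (HP : 0 <= P) by (unfold P; apply Rmult_le_pos; [apply Rmult_le_pos; lra|apply sqnn]).
 assert (HkP : kp * P <= 1/2 * P) by (apply Rmult_le_compat_r; lra).
 set (C := k*be*(x1*x2)*(z*z)*(1-m)) in *.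
 assert (-C <= kp/2 * Q + 1/4 * P).
 { unfold P, Q. replace (kp/2*(be*z*(x1*x1)) + 1/4*(be*z*(x2*x2))) with
     (kp / 2 * (x1 * x1) * z * be + 1/4 * (x2*x2) * z * be) by ring.
   assert (Rabs (x1 * x2) * z * be * (kp / om) = kp / om * Rabs (x1 * x2) * z * be) by ring.
   pose proof (Rabs_triang_inv 0 C). rewrite Rminus_0_l, Rabs_Ropp in *.
   assert (- C <= Rabs C) by (rewrite <- Rabs_Ropp; apply RRle_abs).
   assert ((kp / 2 * (x1 * x1) + kp / (om * om) / 2 * (x2 * x2)) * z * be =
      kp / 2 * (x1 * x1) * z * be + kp / (om * om) / 2 * (x2 * x2) * z * be) by ring. lra. }
 clearbody C.
 assert (-2 * be * x2 * x2 * z + kp * be * (x2 * x2 - x1 * x1) * z = -2 * P + kp * P - kp * Q) by (unfold P, Q; ring).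
 assert (- (kp * be / 2) * (x1 * x1 + x2 * x2) * z = - (kp/2) * Q - (kp/2) * P) by (unfold P,Q; field).
 lra.
Qed.

Lemma Epart k x1 x2 e1 e2 z r d : 0 <= k -> k <= 1/4 -> 0 < z -> z <= 1 -> r*r*(z*z) <= 1 -> 0 <= r ->
  r * r = x1*x1 + x2*x2 -> 0 <= d -> e1*e1 + e2*e2 <= d*d ->
  2*(x1*e1 + x2*e2) + k*(x2*e1 + x1*e2)*z - k*(x1*x2)*(x1*e1+x2*e2)*(z*z*z) <= 3*r*d.
Proof.
 intros Hk0 Hk1 Hz Hz1 Hrz Hr Hrr Hd He.
 pose proof (cs_bound x1 x2 e1 e2 r d Hr Hd Hrr He) as C1.
 pose proof (cs_bound x2 x1 e1 e2 r d Hr Hd ltac:(lra) He) as C2.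
 assert (Hrd : 0 <= r * d) by (apply Rmult_le_pos; auto).
 set (A := x1*e1+x2*e2) in *. set (B := x2*e1+x1*e2) in *.
 pose proof (Rle_abs A). pose proof (Rle_abs B). pose proof (Rle_abs (-A)). rewrite Rabs_Ropp in *.
 pose proof (Rle_abs (-B)). rewrite Rabs_Ropp in *.
 assert (T2 : k*B*z <= (1/4) * (r*d)).
 { assert (k*B*z <= k * (r*d) * z).
   { apply Rmult_le_compat_r; [lra|]. apply Rmult_le_compat_l; lra. }
   assert (k * (r*d) * z <= k * (r*d)).
   { replace (k*(r*d)) with (k*(r*d)*1) at 2 by ring. apply Rmult_le_compat_l; [|lra].
     apply Rmult_le_pos; auto. }
   assert (k * (r*d) <= 1/4 * (r*d)) by (apply Rmult_le_compat_r; lra). lra. }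
 assert (Hx12 : Rabs (x1*x2) <= r*r/2).
 { apply abs_le_of_sq. apply Rmult_le_pos; [apply sqnn|lra].
   pose proof (sqnn (x1 - x2)). pose proof (sqnn (x1 + x2)). rewrite Hrr.
   assert ((x1*x1+x2*x2)/2*((x1*x1+x2*x2)/2) - x1*x2*(x1*x2) = ((x1-x2)*(x1-x2))*((x1+x2)*(x1+x2))/4) by field.
   assert (0 <= ((x1-x2)*(x1-x2))*((x1+x2)*(x1+x2))) by (apply Rmult_le_pos; auto). lra. }
 assert (T3 : - (k*(x1*x2)*A*(z*z*z)) <= (1/8) * (r*d)).
 { assert (Habs : Rabs (k*(x1*x2)*A*(z*z*z)) <= k * (r*r/2) * (r*d) * (z*z*z)).
   { replace (k*(x1*x2)*A*(z*z*z)) with ((k*(z*z*z)) * ((x1*x2)*A)) by ring.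
     assert (Hkz : 0 <= k*(z*z*z)) by (apply Rmult_le_pos; [lra|]; repeat apply Rmult_le_pos; lra).
     rewrite Rabs_mult, (Rabs_right (k*(z*z*z))) by lra. rewrite Rabs_mult.
     assert (Rabs (x1*x2) * Rabs A <= r*r/2 * (r*d)).
     { apply Rmult_le_compat; auto; apply Rabs_pos. }
     replace (k * (r*r/2) * (r*d) * (z*z*z)) with ((k*(z*z*z)) * (r*r/2*(r*d))) by ring.
     apply Rmult_le_compat_l; auto. }
   assert (k * (r*r/2) * (r*d) * (z*z*z) = (k/2) * (r*d) * (r*r*(z*z)) * z) by field.
   assert ((k/2) * (r*d) * (r*r*(z*z)) * z <= (k/2) * (r*d) * 1 * 1).
   { assert (HP : 0 <= (k/2)*(r*d)) by (apply Rmult_le_pos; lra).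
     assert (Hq : 0 <= r*r*(z*z)) by (apply Rmult_le_pos; apply sqnn).
     assert (0 <= (k/2)*(r*d)*(r*r*(z*z))) by (apply Rmult_le_pos; auto).
     assert ((k/2)*(r*d)*(r*r*(z*z))*z <= (k/2)*(r*d)*(r*r*(z*z))*1) by (apply Rmult_le_compat_l; lra).
     assert ((k/2)*(r*d)*(r*r*(z*z)) <= (k/2)*(r*d)*1) by (apply Rmult_le_compat_l; lra).
     lra. }
   assert ((k/2)*(r*d) <= (1/8)*(r*d)) by (apply Rmult_le_compat_r; lra).
   pose proof (Rle_abs (-(k*(x1*x2)*A*(z*z*z)))). rewrite Rabs_Ropp in *. lra. }
 lra.
Qed.

Lemma Wd_bound om be kp k x1 x2 e1 e2 z r d : 0 < om -> 0 < be <= 1 -> 0 < kp -> kp <= 1/2 ->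
  kp / (om*om) <= 1/2 -> kp / om <= 1/4 -> k = kp * be / om -> 0 < z -> z <= 1 ->
  r*r*(z*z) <= 1 -> 0 <= r -> r * r = x1*x1 + x2*x2 -> 0 <= d -> e1*e1 + e2*e2 <= d*d ->
  2*(x1*(om*x2 + e1) + x2*(- om*x1 - be*x2*z + e2)) +
  k*(((om*x2 + e1)*x2 + x1*(- om*x1 - be*x2*z + e2))*z
     - x1*x2*(x1*(om*x2 + e1)+x2*(- om*x1 - be*x2*z + e2))*(z*z*z))
   <= - (kp*be/2) * (r*r) * z + 3*r*d.
Proof.
 intros Hom Hbe Hkp Hkp2 Hkp3 Hkp4 Hk Hz Hz1 Hrz Hr Hrr Hd He.
 assert (Hk0 : 0 <= k) by (subst; apply Rmult_le_pos; [nra| left; apply Rinv_0_lt_compat; lra]).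
 assert (Hk1 : k <= 1/4).
 { subst k. replace (kp*be/om) with ((kp/om)*be) by (field; lra).
   assert (0 <= kp/om) by (apply Rmult_le_pos; [lra| left; apply Rinv_0_lt_compat; lra]). nra. }
 assert (Hm : x2*x2*(z*z) <= 1).
 { assert (x2*x2 <= r*r) by (rewrite Hrr; pose proof (sqnn x1); lra).
   assert (x2*x2*(z*z) <= r*r*(z*z)) by (apply Rmult_le_compat_r; [apply sqnn|lra]). lra. }
 pose proof (Dpart om be kp k x1 x2 z (x2*x2*(z*z)) Hom Hbe Hkp Hkp2 Hkp3 Hk Hz Hz1
   (Rmult_le_pos _ _ (sqnn x2) (sqnn z)) Hm) as HD.
 pose proof (Epart k x1 x2 e1 e2 z r d Hk0 Hk1 Hz Hz1 Hrz Hr Hrr Hd He) as HE.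
 rewrite <- Hrr in HD.
 assert (Heq : 2 * (x1 * (om * x2 + e1) + x2 * (- om * x1 - be * x2 * z + e2)) +
   k * (((om * x2 + e1) * x2 + x1 * (- om * x1 - be * x2 * z + e2)) * z -
      x1 * x2 * (x1 * (om * x2 + e1) + x2 * (- om * x1 - be * x2 * z + e2)) * (z * z * z))
   = (-2*be*x2*x2*z + k*om*(x2*x2 - x1*x1)*z - k*be*(x1*x2)*(z*z)*(1 - x2*x2*(z*z)))
     + (2*(x1*e1 + x2*e2) + k*(x2*e1 + x1*e2)*z - k*(x1*x2)*(x1*e1+x2*e2)*(z*z*z))) by ring.
 rewrite Heq. lra.
Qed.

Lemma Wd_strict a r z d rho : 0 < a -> 0 < d -> d <= a/12 -> rho = 7*d/a -> rho <= r -> 0 < z ->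
  z*z*(1 + r*r) = 1 -> - a * (r*r) * z + 3*r*d <= - 3*d*rho.
Proof.
 intros Ha Hd Hda Hrho Hr Hz Hzr.
 assert (Hrho0 : 0 < rho) by (subst; apply Rdiv_lt_0_compat; lra).
 assert (Har : a * rho = 7 * d) by (subst; field; lra).
 assert (H1 : 49*d*d <= a*a*(r*r)).
 { assert (a*rho <= a*r) by (apply Rmult_le_compat_l; lra).
   assert (7*d*(7*d) <= (a*r)*(a*r)) by (apply Rmult_le_compat; lra). nra. }
 assert (H2 : 36*d*d*(1 + r*r) <= a*a*(r*r)).
 { assert (36*d*d <= a*a/4) by nra. assert (0 <= r*r) by apply sqnn.
   assert (36*d*d*(r*r) <= a*a/4*(r*r)) by (apply Rmult_le_compat_r; lra). nra. }
 assert (H3 : 6*d <= a*r*z).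
 { apply Rsqr_incr_0_var. unfold Rsqr.
   replace (a*r*z*(a*r*z)) with (a*a*(r*r)*(z*z)) by ring.
   assert (36*d*d*(1+r*r)*(z*z) <= a*a*(r*r)*(z*z)) by (apply Rmult_le_compat_r; [apply sqnn|lra]).
   replace (36*d*d*(1+r*r)*(z*z)) with (36*d*d*(z*z*(1+r*r))) in H by ring. rewrite Hzr in H. nra.
   repeat apply Rmult_le_pos; lra. }
 assert (- a * (r*r) * z + 3*r*d = r * (3*d - a*r*z)) by ring.
 assert (r * (3*d - a*r*z) <= r * (-3*d)) by (apply Rmult_le_compat_l; lra).
 nra.
Qed.

Lemma ac_ext f g T : (forall t, f t = g t) -> abs_cont_on f T -> abs_cont_on g T.
Proof.
 intros H Hf eps Heps. destruct (Hf eps Heps) as [d [Hd Hd2]]. exists d; split; auto.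
 intros n a b H1 H2 H3. rewrite (rsum_ext _ (fun i => Rabs (f (b i) - f (a i)))).
 apply Hd2; auto. intros; rewrite !H; auto.
Qed.

Lemma ac_nonpos g T : T <= 0 -> abs_cont_on g T.
Proof.
 intros HT eps Heps. exists 1; split; [lra|]. intros n a b H1 _ _.
 rewrite (rsum_ext _ (fun _ => 0)). rewrite rsum_zero; auto.
 intros i Hi. destruct (H1 i Hi) as [[A B] C]. replace (b i) with (a i) by lra.
 rewrite Rminus_diag, Rabs_R0; auto.
Qed.

Lemma sol_ac F e x : is_solution F e x -> forall T,
  abs_cont_on (fun t => fst (x t)) T /\ abs_cont_on (fun t => snd (x t)) T.
Proof.
 intros [H _] T. destruct (Rle_lt_dec T 0). split; apply ac_nonpos; auto. apply H; auto.
Qed.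

Definition Sq a b := sqrt (1 + a*a + b*b).
Definition Wf k a b := a*a + b*b + k * (a*b) * / Sq a b.

Lemma Sq_pos a b : 1 <= Sq a b.
Proof. unfold Sq. apply Rle_trans with (sqrt 1); [rewrite sqrt_1; lra|]. apply sqrt_le_1_alt. pose proof (sqnn a); pose proof (sqnn b); lra. Qed.

Lemma Sq_sq a b : Sq a b * Sq a b = 1 + a*a + b*b.
Proof. unfold Sq. apply sqrt_sqrt. pose proof (sqnn a); pose proof (sqnn b); lra. Qed.

Lemma vnorm_sq x : vnorm x * vnorm x = fst x * fst x + snd x * snd x.
Proof. unfold vnorm. rewrite sqrt_sqrt. ring. pose proof (sqnn (fst x)); pose proof (sqnn (snd x)); nra. Qed.

Lemma vnorm_nn x : 0 <= vnorm x.
Proof. apply sqrt_pos. Qed.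

Lemma sys_fst om be x ev : fst (vadd (sys om be x) ev) = om * snd x + fst ev.
Proof. unfold vadd, sys, vsub, vscale, A0, b0, dot; simpl. ring. Qed.

Lemma sys_snd om be x ev : snd (vadd (sys om be x) ev) =
  - om * fst x - be * snd x * / Sq (fst x) (snd x) + snd ev.
Proof.
 unfold vadd, sys, vsub, vscale, A0, b0, dot; simpl.
 replace (vnorm x * (vnorm x * 1)) with (fst x * fst x + snd x * snd x) by (rewrite Rmult_1_r, vnorm_sq; ring).
 unfold Sq, Rdiv. rewrite Rplus_assoc. ring.
Qed.

Lemma dl_plus f g t a b : derivable_pt_lim f t a -> derivable_pt_lim g t b ->
  derivable_pt_lim (fun s => f s + g s) t (a + b).
Proof. intros; apply (derivable_pt_lim_plus f g); auto. Qed.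
Lemma dl_mult f g t a b : derivable_pt_lim f t a -> derivable_pt_lim g t b ->
  derivable_pt_lim (fun s => f s * g s) t (a * g t + f t * b).
Proof. intros; apply (derivable_pt_lim_mult f g); auto. Qed.
Lemma dl_const c t : derivable_pt_lim (fun _ => c) t 0.
Proof. apply (derivable_pt_lim_const c). Qed.
Lemma dl_sqrt f t a : derivable_pt_lim f t a -> 0 < f t ->
  derivable_pt_lim (fun s => sqrt (f s)) t (/ (2 * sqrt (f t)) * a).
Proof. intros H Hp. apply (derivable_pt_lim_comp f sqrt); auto. apply derivable_pt_lim_sqrt; auto. Qed.
Lemma dl_div f g t a b : derivable_pt_lim f t a -> derivable_pt_lim g t b -> g t <> 0 ->
  derivable_pt_lim (fun s => f s / g s) t ((a * g t - b * f t) / (g t)²).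
Proof. intros; apply (derivable_pt_lim_div f g); auto. Qed.
Lemma dl_ext f g t a b : (forall s, f s = g s) -> a = b -> derivable_pt_lim f t a ->
  derivable_pt_lim g t b.
Proof. intros H Hab Hd eps Heps. destruct (Hd eps Heps) as [del Hdel]. exists del.
 intros h Hh Hh2. rewrite <- !H, <- Hab. auto. Qed.

Lemma W_deriv k x1 x2 t y1 y2 : derivable_pt_lim x1 t y1 -> derivable_pt_lim x2 t y2 ->
  let a := x1 t in let b := x2 t in let z := / Sq a b in
  derivable_pt_lim (fun s => Wf k (x1 s) (x2 s)) t
   (2*(a*y1 + b*y2) + k*((y1*b + a*y2)*z - a*b*(a*y1+b*y2)*(z*z*z))).
Proof.
 intros H1 H2 a b z.
 assert (Hin := dl_plus _ _ t _ _ (dl_plus _ _ t _ _ (dl_const 1 t) (dl_mult _ _ t _ _ H1 H1)) (dl_mult _ _ t _ _ H2 H2)).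
 assert (HS := dl_sqrt _ t _ Hin ltac:(simpl; pose proof (sqnn (x1 t)); pose proof (sqnn (x2 t)); lra)).
 assert (HQ := dl_div (fun s => k * (x1 s * x2 s)) _ t _ _
   (dl_mult (fun _ => k) (fun s => x1 s * x2 s) t _ _ (dl_const k t) (dl_mult _ _ _ _ _ H1 H2)) HS).
 assert (HP := dl_plus _ _ t _ _ (dl_plus _ _ t _ _ (dl_mult _ _ _ _ _ H1 H1) (dl_mult _ _ _ _ _ H2 H2))
    (HQ ltac:(apply Rgt_not_eq; pose proof (Sq_pos (x1 t) (x2 t)); unfold Sq in *; lra))).
 revert HP. apply dl_ext.
 - intros s. unfold Wf, Sq, Rdiv. ring.
 - unfold z, a, b. pose proof (Sq_pos (x1 t) (x2 t)). unfold Sq in *. unfold Rsqr.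
   set (S := sqrt (1 + x1 t * x1 t + x2 t * x2 t)) in *. field. lra.
Qed.

Lemma inv_sqrt_lip y z : 1 <= y -> 1 <= z -> Rabs (/ sqrt y - / sqrt z) <= 1 * Rabs (y - z).
Proof.
 intros Hy Hz.
 assert (HA : 1 <= sqrt y) by (apply Rle_trans with (sqrt 1); [rewrite sqrt_1; lra|apply sqrt_le_1_alt; lra]).
 assert (HB : 1 <= sqrt z) by (apply Rle_trans with (sqrt 1); [rewrite sqrt_1; lra|apply sqrt_le_1_alt; lra]).
 assert (HA2 : sqrt y * sqrt y = y) by (apply sqrt_sqrt; lra).
 assert (HB2 : sqrt z * sqrt z = z) by (apply sqrt_sqrt; lra).
 set (A := sqrt y) in *. set (B := sqrt z) in *.
 assert (E1 : / A - / B = (B - A) / (A * B)) by (field; lra).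
 assert (E2 : y - z = (A - B) * (A + B)) by (rewrite <- HA2, <- HB2; ring).
 rewrite E1, E2. unfold Rdiv. rewrite !Rabs_mult.
 rewrite (Rabs_right (/ (A*B))) by (apply Rle_ge; left; apply Rinv_0_lt_compat; nra).
 rewrite (Rabs_right (A + B)) by lra.
 replace (Rabs (B - A)) with (Rabs (A - B)) by (rewrite <- Rabs_Ropp; f_equal; ring).
 assert (/ (A*B) <= 1).
 { rewrite <- Rinv_1. apply Rinv_le_contravar; [lra|nra]. }
 assert (0 < / (A*B)) by (apply Rinv_0_lt_compat; nra).
 pose proof (Rabs_pos (A - B)). nra.
Qed.

Lemma ac_W F e x k : is_solution F e x -> forall T,
  abs_cont_on (fun t => Wf k (fst (x t)) (snd (x t))) T.
Proof.
 intros Hs T. destruct (sol_ac F e x Hs T) as [H1 H2].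
 assert (HA := ac_mult _ _ T H1 H1). assert (HB := ac_mult _ _ T H2 H2).
 assert (HC := ac_scal k _ T (ac_mult _ _ T H1 H2)).
 assert (HG := ac_plus _ _ T (ac_plus _ _ T (ac_const 1 T) HA) HB).
 assert (HH := ac_lip (fun y => / sqrt y) (fun y => 1 <= y) 1 _ T ltac:(lra) HG
   ltac:(intros; simpl; pose proof (sqnn (fst (x t))); pose proof (sqnn (snd (x t))); lra)
   inv_sqrt_lip).
 assert (HW := ac_plus _ _ T (ac_plus _ _ T HA HB) (ac_mult _ _ T HC HH)).
 revert HW. apply ac_ext. intros t. unfold Wf, Sq. simpl. auto.
Qed.

Lemma W_bounds k a b r : 0 <= k -> k <= 1/4 -> r * r = a*a + b*b ->
  7/8 * (r*r) <= Wf k a b /\ Wf k a b <= 9/8 * (r*r).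
Proof.
 intros Hk0 Hk1 Hr. unfold Wf.
 assert (HS := Sq_pos a b).
 assert (Hx12 : Rabs (a*b) <= r*r/2).
 { apply abs_le_of_sq. pose proof (sqnn r); lra.
   pose proof (sqnn (a - b)). pose proof (sqnn (a + b)). rewrite Hr.
   assert ((a*a+b*b)/2*((a*a+b*b)/2) - a*b*(a*b) = ((a-b)*(a-b))*((a+b)*(a+b))/4) by field.
   assert (0 <= ((a-b)*(a-b))*((a+b)*(a+b))) by (apply Rmult_le_pos; auto). lra. }
 assert (Hz : 0 < / Sq a b <= 1).
 { split. apply Rinv_0_lt_compat; lra. rewrite <- Rinv_1. apply Rinv_le_contravar; lra. }
 assert (Rabs (k * (a*b) * / Sq a b) <= r*r/8).
 { replace (k * (a*b) * / Sq a b) with ((k * / Sq a b) * (a*b)) by ring.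
   rewrite Rabs_mult. rewrite (Rabs_right (k * / Sq a b)) by (apply Rle_ge, Rmult_le_pos; lra).
   replace (k * / Sq a b * Rabs (a*b)) with (k * Rabs (a*b) * / Sq a b) by ring.
   pose proof (Rabs_pos (a*b)).
   assert (k * Rabs (a*b) <= 1/4 * (r*r/2)) by (apply Rmult_le_compat; lra).
   assert (k * Rabs (a*b) * / Sq a b <= k * Rabs (a*b) * 1) by (apply Rmult_le_compat_l; [apply Rmult_le_pos|]; lra).
   lra. }
 pose proof (Rle_abs (k * (a*b) * / Sq a b)). pose proof (Rle_abs (- (k * (a*b) * / Sq a b))).
 rewrite Rabs_Ropp in *. rewrite <- Hr. lra.
Qed.

Lemma kp_k_facts om be : 0 < om -> 0 < be <= 1 ->
  0 <= kap om * be / om /\ kap om * be / om <= 1/4.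
Proof.
 intros Hom Hbe. destruct (kap_facts om Hom) as [A [B [C D]]].
 replace (kap om * be / om) with ((kap om / om) * be) by (field; lra).
 assert (0 <= kap om / om) by (apply Rmult_le_pos; [lra| left; apply Rinv_0_lt_compat; lra]).
 split; nra.
Qed.

Lemma sq_le_of_norm_le v d : vnorm v <= d -> fst v * fst v + snd v * snd v <= d * d.
Proof. intros H. rewrite <- vnorm_sq. pose proof (vnorm_nn v). apply Rmult_le_compat; lra. Qed.

Lemma core om be d e x : 0 < om -> 0 < be <= 1 -> 0 < d -> d <= (kap om * be / 2)/12 ->
 is_solution (sys om be) e x -> (exists T0, 0 <= T0 /\ forall t, T0 <= t -> vnorm (e t) <= d) ->
 exists T, forall t, T <= t -> vnorm (x t) <= 2 * (7 * d / (kap om * be / 2)).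
Proof.
 intros Hom Hbe Hd Hda Hs [T0 [HT0 He]].
 destruct (kap_facts om Hom) as [Kp1 [Kp2 [Kp3 Kp4]]].
 destruct (kp_k_facts om be Hom Hbe) as [Hk0 Hk1].
 set (kp := kap om) in *. set (k := kp * be / om) in *.
 set (a := kp * be / 2) in *. set (rho := 7 * d / a).
 assert (Ha : 0 < a) by (unfold a; nra).
 assert (Hrho : 0 < rho) by (unfold rho; apply Rdiv_lt_0_compat; lra).
 pose proof Hs as [_ [Nul [HNul Hder]]].
 destruct (level (fun t => Wf k (fst (x t)) (snd (x t))) Nul (Rmax T0 1) (9/8 * (rho*rho)) (3*d*rho))
   as [T [HT HT2]].
 - unfold Rmax; destruct Rle_dec; lra.
 - apply (ac_W _ e x k Hs).
 - auto.
 - nra.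
 - intros t Ht HnN. assert (Ht0 : 0 < t) by (revert Ht; unfold Rmax; destruct Rle_dec; lra).
   assert (HeT : vnorm (e t) <= d) by (apply He; revert Ht; unfold Rmax; destruct Rle_dec; lra).
   destruct (Hder t Ht0 HnN) as [D1 D2].
   rewrite sys_fst in D1. rewrite sys_snd in D2.
   pose proof (W_deriv k (fun s => fst (x s)) (fun s => snd (x s)) t _ _ D1 D2) as HW.
   simpl in HW. eexists; split; [exact HW|]. intros Hth.
   set (r := vnorm (x t)).
   assert (Hrr : r * r = fst (x t) * fst (x t) + snd (x t) * snd (x t)) by apply vnorm_sq.
   assert (Hr0 : 0 <= r) by apply vnorm_nn.
   pose proof (Sq_pos (fst (x t)) (snd (x t))) as HS1.
   pose proof (Sq_sq (fst (x t)) (snd (x t))) as HS2.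
   set (S := Sq (fst (x t)) (snd (x t))) in *.
   assert (Hz0 : 0 < / S) by (apply Rinv_0_lt_compat; lra).
   assert (Hz1 : / S <= 1) by (rewrite <- Rinv_1; apply Rinv_le_contravar; lra).
   assert (Hzr : / S * / S * (1 + r * r) = 1) by (replace (1 + r*r) with (S*S) by (rewrite HS2, Hrr; ring); field; lra).
   assert (Hrz : r * r * (/ S * / S) <= 1) by (pose proof (sqnn r); nra).
   pose proof (sq_le_of_norm_le (e t) d HeT) as He2.
   eapply Rle_trans. apply (Wd_bound om be kp k _ _ _ _ _ r d); auto; lra.
   fold a. eapply Rle_trans; [apply (Wd_strict a r (/ S) d rho); auto|lra].
   destruct (W_bounds k (fst (x t)) (snd (x t)) r Hk0 Hk1 Hrr) as [_ Wb].
   apply Rsqr_incr_0_var; [unfold Rsqr; nra|lra].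
 - exists T. intros t Ht. specialize (HT2 t Ht). simpl in HT2.
   set (r := vnorm (x t)).
   assert (Hrr : r * r = fst (x t) * fst (x t) + snd (x t) * snd (x t)) by apply vnorm_sq.
   assert (Hr0 : 0 <= r) by apply vnorm_nn.
   destruct (W_bounds k (fst (x t)) (snd (x t)) r Hk0 Hk1 Hrr) as [Wb _].
   fold rho. apply Rsqr_incr_0_var; [unfold Rsqr; nra|lra].
Qed.

Lemma vnorm_le v B : 0 <= B -> fst v * fst v + snd v * snd v <= B * B -> vnorm v <= B.
Proof.
 intros HB H. pose proof (vnorm_nn v). apply Rsqr_incr_0_var; auto. unfold Rsqr. rewrite vnorm_sq. auto.
Qed.

Lemma vnorm_lt_of_sq v B : 0 <= B -> vnorm v * vnorm v < B * B -> vnorm v < B.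
Proof. intros HB H. pose proof (vnorm_nn v). nra. Qed.

Lemma no_input_fst t : fst (no_input t) = 0. Proof. reflexivity. Qed.
Lemma no_input_snd t : snd (no_input t) = 0. Proof. reflexivity. Qed.

Lemma lyap_generic Fv (Wg : R -> R -> R) :
  (forall x, is_solution Fv no_input x ->
     (forall T, abs_cont_on (fun t => Wg (fst (x t)) (snd (x t))) T) /\
     exists N, null_set N /\ forall t, 0 < t -> ~ N t ->
       exists D, derivable_pt_lim (fun t => Wg (fst (x t)) (snd (x t))) t D /\ D <= 0) ->
  (forall a b r, r * r = a*a + b*b -> 7/8 * (r*r) <= Wg a b /\ Wg a b <= 9/8 * (r*r)) ->
  lyap_stable Fv.
Proof.
 intros HW HB eps Heps. exists (eps/2); split; [lra|]. intros x Hs H0 t Ht.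
 destruct (HW x Hs) as [Hac [N [HN Hd]]].
 assert (Hm : Wg (fst (x t)) (snd (x t)) <= Wg (fst (x 0)) (snd (x 0))).
 { apply (mono_deriv (fun t => Wg (fst (x t)) (snd (x t))) t 0 t N); auto; try lra. intros tau Htau Hn. apply Hd; auto; lra. }
 destruct (HB (fst (x t)) (snd (x t)) (vnorm (x t)) (vnorm_sq _)) as [A _].
 destruct (HB (fst (x 0)) (snd (x 0)) (vnorm (x 0)) (vnorm_sq _)) as [_ B].
 pose proof (vnorm_nn (x 0)). pose proof (vnorm_nn (x t)).
 assert (vnorm (x 0) * vnorm (x 0) < eps/2 * (eps/2)) by (apply Rmult_le_0_lt_compat; lra).
 apply vnorm_lt_of_sq; [lra|]. nra.
Qed.

Lemma nl_deriv_nonpos om be x : 0 < om -> 0 < be <= 1 -> is_solution (sys om be) no_input x ->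
  exists N, null_set N /\ forall t, 0 < t -> ~ N t ->
   exists D, derivable_pt_lim (fun t => Wf (kap om * be / om) (fst (x t)) (snd (x t))) t D /\ D <= 0.
Proof.
 intros Hom Hbe Hs. destruct (kap_facts om Hom) as [Kp1 [Kp2 [Kp3 Kp4]]].
 destruct (kp_k_facts om be Hom Hbe) as [Hk0 Hk1].
 pose proof Hs as [_ [Nul [HNul Hder]]]. exists Nul; split; auto.
 intros t Ht HnN. destruct (Hder t Ht HnN) as [D1 D2].
 rewrite sys_fst in D1. rewrite sys_snd in D2.
 pose proof (W_deriv (kap om * be / om) (fun s => fst (x s)) (fun s => snd (x s)) t _ _ D1 D2) as HW.
 simpl in HW. eexists; split; [exact HW|].
 set (r := vnorm (x t)).
 assert (Hrr : r * r = fst (x t) * fst (x t) + snd (x t) * snd (x t)) by apply vnorm_sq.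
 assert (Hr0 : 0 <= r) by apply vnorm_nn.
 pose proof (Sq_pos (fst (x t)) (snd (x t))) as HS1.
 pose proof (Sq_sq (fst (x t)) (snd (x t))) as HS2.
 set (S := Sq (fst (x t)) (snd (x t))) in *.
 assert (Hz0 : 0 < / S) by (apply Rinv_0_lt_compat; lra).
 assert (Hz1 : / S <= 1) by (rewrite <- Rinv_1; apply Rinv_le_contravar; lra).
 assert (Hzr : / S * / S * (1 + r * r) = 1) by (replace (1 + r*r) with (S*S) by (rewrite HS2, Hrr; ring); field; lra).
 assert (Hrz : r * r * (/ S * / S) <= 1) by (pose proof (sqnn r); nra).
 try rewrite no_input_fst, no_input_snd. unfold vzero; simpl.
 eapply Rle_trans. apply (Wd_bound om be (kap om) (kap om * be / om) _ _ _ _ _ r 0); auto; try lra.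
 assert (0 <= kap om * be / 2 * (r*r) * / S).
 { apply Rmult_le_pos; [|lra]. apply Rmult_le_pos; [|apply sqnn]. nra. }
 rewrite !Rmult_0_r. lra.
Qed.

Lemma nl_lyap om be : 0 < om -> 0 < be <= 1 -> lyap_stable (sys om be).
Proof.
 intros Hom Hbe. destruct (kp_k_facts om be Hom Hbe) as [Hk0 Hk1].
 apply (lyap_generic _ (Wf (kap om * be / om))).
 - intros x Hs. split. apply (ac_W _ _ x _ Hs). apply nl_deriv_nonpos; auto.
 - intros a b r Hr. apply W_bounds; auto.
Qed.

Lemma nl_conv om be x : 0 < om -> 0 < be <= 1 -> is_solution (sys om be) no_input x -> converges_to_0 x.
Proof.
 intros Hom Hbe Hs eps Heps. destruct (kap_facts om Hom) as [Kp1 [Kp2 [Kp3 Kp4]]].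
 set (a := kap om * be / 2). assert (Ha : 0 < a) by (unfold a; nra).
 set (d := Rmin (a/12) (eps * a / 28)).
 assert (Hd : 0 < d) by (unfold d, Rmin; destruct Rle_dec; [lra|apply Rdiv_lt_0_compat; nra]).
 assert (Hd1 : d <= a/12) by (unfold d, Rmin; destruct Rle_dec; lra).
 assert (Hd2 : d <= eps * a / 28) by (unfold d, Rmin; destruct Rle_dec; lra).
 destruct (core om be d no_input x Hom Hbe Hd Hd1 Hs) as [T HT].
 { exists 0; split; [lra|]. intros t _. unfold vnorm. rewrite no_input_fst, no_input_snd.
   simpl. rewrite Rmult_0_l, Rplus_0_r, sqrt_0. lra. }
 exists T. intros t Ht. specialize (HT t Ht). fold a in HT.
 assert (2 * (7 * d / a) <= eps / 2).
 { apply Rmult_le_reg_r with a; auto. field_simplify; [|lra]. lra. }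
 lra.
Qed.

Definition Wl k a b := a*a + b*b + k*(a*b).
Definition Jm om be := Mat2 0 om (-om) (-be).

Lemma Wl_bounds k a b r : 0 <= k -> k <= 1/4 -> r * r = a*a + b*b ->
  7/8 * (r*r) <= Wl k a b /\ Wl k a b <= 9/8 * (r*r).
Proof.
 intros Hk0 Hk1 Hr. unfold Wl.
 assert (Hx12 : Rabs (a*b) <= r*r/2).
 { apply abs_le_of_sq. pose proof (sqnn r); lra.
   pose proof (sqnn (a - b)). pose proof (sqnn (a + b)). rewrite Hr.
   assert ((a*a+b*b)/2*((a*a+b*b)/2) - a*b*(a*b) = ((a-b)*(a-b))*((a+b)*(a+b))/4) by field.
   assert (0 <= ((a-b)*(a-b))*((a+b)*(a+b))) by (apply Rmult_le_pos; auto). lra. }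
 assert (Rabs (k*(a*b)) <= r*r/8).
 { rewrite Rabs_mult, (Rabs_right k) by lra. pose proof (Rabs_pos (a*b)).
   assert (k * Rabs (a*b) <= 1/4 * (r*r/2)) by (apply Rmult_le_compat; lra). lra. }
 pose proof (Rle_abs (k*(a*b))). pose proof (Rle_abs (-(k*(a*b)))). rewrite Rabs_Ropp in *.
 rewrite <- Hr. lra.
Qed.

Lemma ac_Wl F e x k : is_solution F e x -> forall T,
  abs_cont_on (fun t => Wl k (fst (x t)) (snd (x t))) T.
Proof.
 intros Hs T. destruct (sol_ac F e x Hs T) as [H1 H2].
 assert (HW := ac_plus _ _ T (ac_plus _ _ T (ac_mult _ _ T H1 H1) (ac_mult _ _ T H2 H2))
    (ac_scal k _ T (ac_mult _ _ T H1 H2))).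
 revert HW. apply ac_ext. intros t. unfold Wl. auto.
Qed.

Lemma lin_deriv om be x : 0 < om -> 0 < be <= 1 -> is_solution (mapply (Jm om be)) no_input x ->
  exists N, null_set N /\ forall t, 0 < t -> ~ N t ->
   exists D, derivable_pt_lim (fun t => Wl (kap om * be / om) (fst (x t)) (snd (x t))) t D /\
     D <= - (kap om * be / 2) * (vnorm (x t) * vnorm (x t)).
Proof.
 intros Hom Hbe Hs. destruct (kap_facts om Hom) as [Kp1 [Kp2 [Kp3 Kp4]]].
 pose proof Hs as [_ [Nul [HNul Hder]]]. exists Nul; split; auto.
 intros t Ht HnN. destruct (Hder t Ht HnN) as [D1 D2].
 simpl in D1, D2.
 set (k := kap om * be / om).
 assert (HW := dl_plus _ _ t _ _ (dl_plus _ _ t _ _ (dl_mult _ _ _ _ _ D1 D1) (dl_mult _ _ _ _ _ D2 D2))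
    (dl_mult _ _ t _ _ (dl_const k t) (dl_mult _ _ _ _ _ D1 D2))).
 eexists; split.
 - refine (dl_ext _ _ t _ _ (fun s => eq_refl) eq_refl HW).
 - rewrite vnorm_sq. simpl.
   pose proof (Dpart om be (kap om) k (fst (x t)) (snd (x t)) 1 0 Hom Hbe Kp1 Kp2 Kp3 eq_refl
     ltac:(lra) ltac:(lra) ltac:(lra) ltac:(lra)) as HD.
   set (a1 := fst (x t)) in *. set (b1 := snd (x t)) in *.
   assert (E : (0 * a1 + om * b1 + 0) * a1 + a1 * (0 * a1 + om * b1 + 0) +
     ((- om * a1 + - be * b1 + 0) * b1 + b1 * (- om * a1 + - be * b1 + 0)) +
     (0 * (a1 * b1) + k * ((0 * a1 + om * b1 + 0) * b1 + a1 * (- om * a1 + - be * b1 + 0)))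
     = -2*be*b1*b1*1 + k*om*(b1*b1 - a1*a1)*1 - k*be*(a1*b1)*(1*1)*(1 - 0)) by ring.
   rewrite E. lra.
Qed.

Lemma lin_AS om be : 0 < om -> 0 < be <= 1 -> asympt_stable (mapply (Jm om be)).
Proof.
 intros Hom Hbe. destruct (kp_k_facts om be Hom Hbe) as [Hk0 Hk1].
 destruct (kap_facts om Hom) as [Kp1 [Kp2 [Kp3 Kp4]]].
 set (a := kap om * be / 2). assert (Ha : 0 < a) by (unfold a; nra).
 split.
 - apply (lyap_generic _ (Wl (kap om * be / om))).
   + intros x Hs. split. apply (ac_Wl _ _ x _ Hs).
     destruct (lin_deriv om be x Hom Hbe Hs) as [N [HN Hd]]. exists N; split; auto.
     intros t Ht Hn. destruct (Hd t Ht Hn) as [D [HD1 HD2]]. exists D; split; auto.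
     pose proof (sqnn (vnorm (x t))). fold a in HD2. nra.
   + intros a0 b r Hr. apply Wl_bounds; auto.
 - exists 1; split; [lra|]. intros x Hs _ eps Heps.
   destruct (lin_deriv om be x Hom Hbe Hs) as [N [HN Hd]].
   set (th := 9/8 * (eps/2 * (eps/2))).
   assert (Hth : 0 < th) by (unfold th; nra).
   destruct (level (fun t => Wl (kap om * be / om) (fst (x t)) (snd (x t))) N 1 th (a * (8/9) * th))
     as [T [HT HT2]]; [lra| |exact HN| | | ].
   + apply (ac_Wl _ _ x _ Hs).
   + apply Rmult_lt_0_compat; [apply Rmult_lt_0_compat|]; lra.
   + intros t Ht Hn. destruct (Hd t ltac:(lra) Hn) as [D [HD1 HD2]]. exists D; split; auto.
     intros Hw. fold a in HD2.
     destruct (Wl_bounds (kap om * be / om) (fst (x t)) (snd (x t)) (vnorm (x t)) Hk0 Hk1 (vnorm_sq _)) as [_ B].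
     assert (8/9 * th <= vnorm (x t) * vnorm (x t)) by lra.
     assert (a * (8/9*th) <= a * (vnorm (x t) * vnorm (x t))) by (apply Rmult_le_compat_l; lra).
     lra.
   + exists T. intros t Ht. specialize (HT2 t Ht). simpl in HT2.
     destruct (Wl_bounds (kap om * be / om) (fst (x t)) (snd (x t)) (vnorm (x t)) Hk0 Hk1 (vnorm_sq _)) as [A _].
     apply vnorm_lt_of_sq; [lra|]. unfold th in *. nra.
Qed.

Lemma sys_fst0 om be x : fst (sys om be x) = om * snd x.
Proof. unfold sys, vsub, vscale, A0, b0, dot; simpl. ring. Qed.

Lemma sys_snd0 om be x : snd (sys om be x) = - om * fst x - be * snd x * / Sq (fst x) (snd x).
Proof. replace (snd (sys om be x)) with (snd (vadd (sys om be x) vzero)) by (unfold vadd; simpl; ring).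
 rewrite sys_snd. unfold vzero. simpl. ring. Qed.

Lemma frechet om be : 0 < om -> 0 < be <= 1 -> frechet_deriv_at0 (sys om be) (Jm om be).
Proof.
 intros Hom Hbe eps Heps. exists (Rmin 1 eps). split. unfold Rmin; destruct Rle_dec; lra.
 intros x Hx.
 assert (Hx1 : vnorm x < 1) by (revert Hx; unfold Rmin; destruct Rle_dec; lra).
 assert (Hx2 : vnorm x < eps) by (revert Hx; unfold Rmin; destruct Rle_dec; lra).
 set (r := vnorm x) in *. pose proof (vnorm_nn x) as Hr0. fold r in Hr0.
 assert (Hrr : r * r = fst x * fst x + snd x * snd x) by apply vnorm_sq.
 pose proof (Sq_pos (fst x) (snd x)) as HS1. pose proof (Sq_sq (fst x) (snd x)) as HS2.
 assert (HS0 : Sq 0 0 = 1) by (unfold Sq; rewrite Rmult_0_l, !Rplus_0_r; apply sqrt_1).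
 set (S := Sq (fst x) (snd x)) in *.
 apply vnorm_le. apply Rmult_le_pos; lra.
 pose proof (sys_fst0 om be x) as F1. pose proof (sys_snd0 om be x) as F2.
 pose proof (sys_fst0 om be vzero) as F3. pose proof (sys_snd0 om be vzero) as F4.
 remember (sys om be x) as Fx. remember (sys om be vzero) as F0.
 unfold vsub, mapply, Jm; simpl. rewrite F1, F2, F3, F4. unfold vzero; simpl. rewrite HS0. fold S.
 set (a1 := fst x) in *. set (b1 := snd x) in *.
 assert (E1 : om * b1 - om * 0 - (0 * a1 + om * b1) = 0) by ring.
 assert (E2 : - om * a1 - be * b1 * / S - (- om * 0 - be * 0 * / 1) - (- om * a1 + - be * b1)
   = be * b1 * (1 - / S)) by (field; lra).
 rewrite E1, E2.
 assert (Hz : 0 < / S <= 1) by (split; [apply Rinv_0_lt_compat; lra| rewrite <- Rinv_1; apply Rinv_le_contravar; lra]).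
 assert (HSle : S <= 1 + r*r/2).
 { assert (HS3 : S * S = 1 + r*r) by (rewrite HS2, Hrr; ring).
   apply Rsqr_incr_0_var; unfold Rsqr. rewrite HS3. pose proof (sqnn (r*r)). nra.
   pose proof (sqnn r). lra. }
 assert (Hq : 0 <= 1 - / S <= r*r/2).
 { split. lra. assert (1 - / S = (S - 1) / S) by (field; lra).
   rewrite H. apply Rle_trans with (S - 1). 
   unfold Rdiv. assert (0 <= S - 1) by lra.
   assert ((S - 1) * / S <= (S - 1) * 1) by (apply Rmult_le_compat_l; lra). lra. lra. }
 assert (Hb1 : b1 * b1 <= r * r) by (pose proof (sqnn a1); lra).
 assert (Hr2 : r * r / 2 <= eps / 2).
 { assert (r * r <= r * 1) by (apply Rmult_le_compat_l; lra). nra. }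
 set (q := 1 - / S) in *.
 assert (0 * 0 + be * b1 * q * (be * b1 * q) = (be*be) * (b1*b1) * (q*q)) by ring.
 rewrite H.
 assert (be*be <= 1) by nra.
 assert (q * q <= eps * eps) by (apply Rmult_le_compat; lra).
 assert ((be*be) * (b1*b1) <= 1 * (r*r)) by (apply Rmult_le_compat; try lra; apply sqnn).
 assert ((be*be) * (b1*b1) * (q*q) <= (1*(r*r)) * (eps*eps)) by (apply Rmult_le_compat; try lra;
   [apply Rmult_le_pos; apply sqnn | apply sqnn]).
 nra.
Qed.

Theorem lemma3 :
  forall omega : R, 0 < omega ->
  exists Gamma N : R, 0 < Gamma /\ 0 < N /\
    forall beta : R, 0 < beta <= 1 ->
      SISS_L (sys omega beta) (beta * Gamma) (N / beta) /\
      glob_asympt_stable (sys omega beta) /\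
      linearization_AS (sys omega beta).
Proof.
 intros om Hom. destruct (kap_facts om Hom) as [Kp1 [Kp2 [Kp3 Kp4]]].
 exists (kap om / 24), (28 / kap om). split; [lra|]. split; [apply Rdiv_lt_0_compat; lra|].
 intros be Hbe. split; [|split].
 - intros d [Hd Hd2] e _ _ [T0 [HT0 He]] x Hs.
   destruct (core om be d e x Hom Hbe Hd) as [T HT].
   + replace (kap om * be / 2 / 12) with (be * (kap om / 24)) by field. auto.
   + auto.
   + exists T0; split; [lra|auto].
   + exists (Rmax T 1). split. unfold Rmax; destruct Rle_dec; lra.
     intros t Ht. eapply Rle_trans. apply HT. revert Ht; unfold Rmax; destruct Rle_dec; lra.
     right. field. split; lra.
 - split. apply nl_lyap; auto. intros x Hs. apply (nl_conv om be); auto.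
 - exists (Jm om be). split. apply frechet; auto. apply lin_AS; auto.
Qed.
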